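(* Let $M$ be a completely metrizable space with a compatible metric. Suppose that for every $\varepsilon>0$ there exist a Krasinkiewicz space $Z_\varepsilon$ and maps $r\colon M\to Z_\varepsilon$ and $\phi\colon Z_\varepsilon\to M$ such that $\phi$ is light and $\phi\circ r$ is $\varepsilon$-close to the identity of $M$ (i.e. $\operatorname{dist}(\phi(r(x)),x)<\varepsilon$ for all $x\in M$). Then $M$ is a Krasinkiewicz space.
   Context: A map is light if all its fibers are zero-dimensional (equivalently, for compact fibers, totally disconnected). For a compact metrizable $X$, a map $g\colon X\to M$ is Krasinkiewicz if every subcontinuum of $X$ is either contained in a fiber of $g$ or contains a component of some fiber of $g$; a metrizable space $M$ is a Krasinkiewicz space if for every compact metrizable $X$ the Krasinkiewicz maps are dense in $C(X,M)$ with the uniform topology. *)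

(* Defs.v *)
From Stdlib Require Import Reals List.
Open Scope R_scope.

Definition is_metric {T : Type} (m : T -> T -> R) : Prop :=
  (forall x y, 0 <= m x y) /\
  (forall x y, m x y = 0 <-> x = y) /\
  (forall x y, m x y = m y x) /\
  (forall x y z, m x z <= m x y + m y z).

Record MetricSpace := {
  carrier :> Type;
  mdist : carrier -> carrier -> R;
  mdist_metric : is_metric mdist
}.
Arguments mdist {m} _ _.

Section Topology.
Context {X : MetricSpace}.

Definition open_wrt (m : X -> X -> R) (U : X -> Prop) : Prop :=
  forall x, U x -> exists e, 0 < e /\ forall y, m x y < e -> U y.

Definition open (U : X -> Prop) : Prop := open_wrt mdist U.
Definition closed (F : X -> Prop) : Prop := open (fun x => ~ F x).

Definition subset (A B : X -> Prop) : Prop := forall x, A x -> B x.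

Definition rel_open (A B : X -> Prop) : Prop :=
  subset B A /\ exists U, open U /\ forall x, A x -> (B x <-> U x).
Definition rel_closed (A B : X -> Prop) : Prop :=
  subset B A /\ exists F, closed F /\ forall x, A x -> (B x <-> F x).

Definition compact (K : X -> Prop) : Prop :=
  forall (I : Type) (U : I -> X -> Prop),
    (forall i, open (U i)) ->
    (forall x, K x -> exists i, U i x) ->
    exists l : list I, forall x, K x -> exists i, In i l /\ U i x.

Definition connected (S : X -> Prop) : Prop :=
  forall U V : X -> Prop, open U -> open V ->
    (forall x, S x -> U x \/ V x) ->
    (forall x, S x -> U x -> V x -> False) ->
    subset S U \/ subset S V.

Definition subcontinuum (K : X -> Prop) : Prop :=
  (exists x, K x) /\ compact K /\ connected K.

Definition component (S : X -> Prop) (x : X) : X -> Prop :=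
  fun y => exists C, connected C /\ subset C S /\ C x /\ C y.

(* covering dimension <= 0 for a metrizable subspace A (dim = Ind here):
   any two disjoint closed subsets are separated by a clopen set. *)
Definition zero_dimensional (A : X -> Prop) : Prop :=
  forall B C, rel_closed A B -> rel_closed A C ->
    (forall x, B x -> C x -> False) ->
    exists W, rel_open A W /\ rel_closed A W /\
      subset B W /\ (forall x, W x -> C x -> False).

Definition complete_wrt (m : X -> X -> R) : Prop :=
  forall u : nat -> X,
    (forall e, 0 < e -> exists N, forall p q, (N <= p)%nat -> (N <= q)%nat -> m (u p) (u q) < e) ->
    exists l, forall e, 0 < e -> exists N, forall n, (N <= n)%nat -> m (u n) l < e.

End Topology.

Definition completely_metrizable (M : MetricSpace) : Prop :=
  exists m : M -> M -> R, is_metric m /\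
    (forall U : M -> Prop, open U <-> open_wrt m U) /\ complete_wrt m.

Definition continuous {X Y : MetricSpace} (f : X -> Y) : Prop :=
  forall x e, 0 < e -> exists d, 0 < d /\
    forall y, mdist x y < d -> mdist (f x) (f y) < e.

Definition fiber {X Y : MetricSpace} (f : X -> Y) (y : Y) : X -> Prop :=
  fun x => f x = y.

Definition light {X Y : MetricSpace} (f : X -> Y) : Prop :=
  forall y, zero_dimensional (fiber f y).

Definition krasinkiewicz_map {X M : MetricSpace} (g : X -> M) : Prop :=
  forall K : X -> Prop, subcontinuum K ->
    (exists y, subset K (fiber g y)) \/
    (exists y x, fiber g y x /\ subset (component (fiber g y) x) K).

(* Krasinkiewicz space: for every compact metrizable X, Krasinkiewicz maps are
   dense in C(X,M) with the uniform (sup-metric) topology. *)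
Definition krasinkiewicz_space (M : MetricSpace) : Prop :=
  forall (X : MetricSpace), compact (fun _ : X => True) ->
  forall f : X -> M, continuous f ->
  forall e, 0 < e ->
    exists g : X -> M, continuous g /\ krasinkiewicz_map g /\
      forall x, mdist (f x) (g x) < e.

(* Main.v *)
Require Import Defs.
From Stdlib Require Import Reals Lra List Classical ClassicalEpsilon.
Open Scope R_scope.

Section Aux.

Lemma d_pos (T : MetricSpace) (x y : T) : 0 <= mdist x y.
Proof. destruct (mdist_metric T) as [H _]. apply H. Qed.
Lemma d_zero (T : MetricSpace) (x y : T) : mdist x y = 0 <-> x = y.
Proof. destruct (mdist_metric T) as [_ [H _]]. apply H. Qed.
Lemma d_sym (T : MetricSpace) (x y : T) : mdist x y = mdist y x.
Proof. destruct (mdist_metric T) as [_ [_ [H _]]]. apply H. Qed.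
Lemma d_tri (T : MetricSpace) (x y z : T) : mdist x z <= mdist x y + mdist y z.
Proof. destruct (mdist_metric T) as [_ [_ [_ H]]]. apply H. Qed.

Lemma d_refl (T : MetricSpace) (x : T) : mdist x x = 0.
Proof. apply d_zero. reflexivity. Qed.

Lemma cont_comp (X Y W : MetricSpace) (f : X -> Y) (g : Y -> W) :
  continuous f -> continuous g -> continuous (fun x => g (f x)).
Proof.
  intros Hf Hg x e He.
  destruct (Hg (f x) e He) as [d1 [Hd1 H1]].
  destruct (Hf x d1 Hd1) as [d2 [Hd2 H2]].
  exists d2; split; auto.
Qed.

Lemma open_preim (X Y : MetricSpace) (h : X -> Y) (U : Y -> Prop) :
  continuous h -> @open Y U -> @open X (fun x => U (h x)).
Proof.
  intros Hh HU x Hx.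
  destruct (HU (h x) Hx) as [e [He HeU]].
  destruct (Hh x e He) as [d [Hd Hd']].
  exists d; split; auto.
Qed.

Lemma closed_single (T : MetricSpace) (p : T) : @closed T (fun z => z = p).
Proof.
  intros z Hz. exists (mdist p z). split.
  - destruct (d_pos T p z) as [H|H]; auto.
    exfalso; apply Hz. symmetry. apply d_zero. auto.
  - intros y Hy Hyp. subst y. rewrite d_sym in Hy. lra.
Qed.

Lemma fiber_const (X Z M : MetricSpace) (h : X -> Z) (phi : Z -> M) w
  (D : X -> Prop) : continuous h -> zero_dimensional (fiber phi w) ->
  connected D -> (forall d, D d -> phi (h d) = w) ->
  forall a b, D a -> D b -> h a = h b.
Proof.
  intros Hh Hz HD Hfib a b Ha Hb.
  apply NNPP; intro hab.
  destruct (Hz (fun z => z = h a) (fun z => z = h b)) as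
    [W [[HWs [U [HU HWU]]] [[_ [F [HF HWF]]] [HBW HWC]]]].
  - split. intros z ->. unfold fiber. auto.
    exists (fun z => z = h a). split. apply closed_single. tauto.
  - split. intros z ->. unfold fiber. auto.
    exists (fun z => z = h b). split. apply closed_single. tauto.
  - intros z -> E. auto.
  - destruct (HD (fun x => U (h x)) (fun x => ~ F (h x))) as [S|S].
    + apply open_preim; auto.
    + apply (open_preim X Z h (fun z => ~ F z)); auto.
    + intros d Hd. assert (A : fiber phi w (h d)) by (apply Hfib; auto).
      destruct (classic (W (h d))) as [Hw|Hw].
      * left. apply (HWU _ A). auto.
      * right. intro Fd. apply Hw. apply (HWF _ A). auto.
    + intros d Hd Ud nFd. assert (A : fiber phi w (h d)) by (apply Hfib; auto).
      apply nFd. apply (HWF _ A). apply (HWU _ A). auto.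
    + assert (Wb : W (h b)). { apply (HWU _ (Hfib b Hb)). apply S; auto. }
      eapply HWC; eauto.
    + assert (Wa : W (h a)) by (apply HBW; auto).
      apply (S a Ha). apply (HWF _ (Hfib a Ha)). auto.
Qed.

Lemma kras_comp (X Z M : MetricSpace) (h : X -> Z) (phi : Z -> M) :
  continuous h -> light phi -> krasinkiewicz_map h ->
  krasinkiewicz_map (fun x => phi (h x)).
Proof.
  intros Hh Hl Hk K HK.
  destruct (Hk K HK) as [[y Hy]|[y [x [Hx Hc]]]].
  - left. exists (phi y). intros z Hz. unfold fiber in *. rewrite (Hy z Hz). auto.
  - right. exists (phi y), x. split.
    + unfold fiber in *. rewrite Hx. auto.
    + intros y' [D [HD [HDs [Dx Dy]]]]. apply Hc.
      exists D. repeat split; auto.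
      intros d Hd. unfold fiber in *. rewrite <- Hx.
      apply (fiber_const X Z M h phi (phi y) D Hh (Hl _) HD); auto.
Qed.

Fixpoint lmin (l : list R) : R :=
  match l with nil => 1 | a :: t => Rmin a (lmin t) end.

Lemma lmin_pos l : (forall a, In a l -> 0 < a) -> 0 < lmin l.
Proof.
  induction l; simpl; intros H. lra.
  apply Rmin_glb_lt; auto.
Qed.

Lemma lmin_le l a : In a l -> lmin l <= a.
Proof.
  induction l; simpl; intros H. contradiction.
  destruct H as [->|H]. apply Rmin_l.
  eapply Rle_trans. apply Rmin_r. auto.
Qed.

Lemma unif_close (X Z M : MetricSpace) (k : X -> Z) (phi : Z -> M) :
  Defs.compact (fun _ : X => True) -> continuous k -> continuous phi ->
  forall e, 0 < e -> exists d, 0 < d /\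
    forall x z, mdist (k x) z < d -> mdist (phi (k x)) (phi z) < e.
Proof.
  intros HX Hk Hp e He.
  assert (Hd : forall i : X, exists d, 0 < d /\
     forall z, mdist (k i) z < d -> mdist (phi (k i)) (phi z) < e/2).
  { intro i. apply Hp. lra. }
  set (dl := fun i => proj1_sig (constructive_indefinite_description _ (Hd i))).
  assert (Hdl : forall i, 0 < dl i /\
     forall z, mdist (k i) z < dl i -> mdist (phi (k i)) (phi z) < e/2).
  { intro i. unfold dl. destruct (constructive_indefinite_description _ (Hd i)). auto. }
  destruct (HX X (fun i x' => mdist (k i) (k x') < dl i / 2)) as [l Hl].
  - intros i x' Hx'.
    destruct (Hk x' (dl i / 2 - mdist (k i) (k x'))) as [d [Hd0 Hd1]]. lra.
    exists d; split; auto. intros y Hy. specialize (Hd1 y Hy).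
    pose proof (d_tri Z (k i) (k x') (k y)). lra.
  - intros x _. exists x. rewrite d_refl. destruct (Hdl x). lra.
  - exists (lmin (map (fun i => dl i / 2) l)). split.
    + apply lmin_pos. intros a Ha. apply in_map_iff in Ha.
      destruct Ha as [i [<- _]]. destruct (Hdl i). lra.
    + intros x z Hxz. destruct (Hl x I) as [i [Hi Hix]].
      assert (Hm : lmin (map (fun i => dl i / 2) l) <= dl i / 2).
      { apply lmin_le. apply in_map_iff. exists i. auto. }
      destruct (Hdl i) as [Hpos Hc].
      assert (H1 : mdist (phi (k i)) (phi z) < e/2).
      { apply Hc. pose proof (d_tri Z (k i) (k x) z). lra. }
      assert (H2 : mdist (phi (k i)) (phi (k x)) < e/2).
      { apply Hc. lra. }
      pose proof (d_tri M (phi (k x)) (phi (k i)) (phi z)).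
      rewrite (d_sym M (phi (k x)) (phi (k i))) in H. lra.
Qed.

End Aux.

Theorem proposition3p3 (M : MetricSpace) :
  completely_metrizable M ->
  (forall eps, 0 < eps ->
     exists (Z : MetricSpace) (r : M -> Z) (phi : Z -> M),
       krasinkiewicz_space Z /\ continuous r /\ continuous phi /\
       light phi /\ forall x, mdist (phi (r x)) x < eps) ->
  krasinkiewicz_space M.
Proof.
  intros _ H X HX f Hf e He.
  destruct (H (e/2)) as [Z [r [phi [KZ [Hr [Hp [Hl Hc]]]]]]]. lra.
  assert (Hrf : continuous (fun x => r (f x))) by (apply cont_comp; auto).
  destruct (unif_close X Z M (fun x => r (f x)) phi HX Hrf Hp (e/2)) as [d [Hd Hu]]. lra.
  destruct (KZ X HX (fun x => r (f x)) Hrf d Hd) as [h [Hh [Hkh Hclose]]].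
  exists (fun x => phi (h x)). split; [|split].
  - apply cont_comp; auto.
  - apply kras_comp; auto.
  - intro x. specialize (Hu x (h x) (Hclose x)). specialize (Hc (f x)).
    pose proof (d_tri M (f x) (phi (r (f x))) (phi (h x))).
    rewrite (d_sym M (f x) (phi (r (f x)))) in H0. lra.
Qed.
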